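(* In the HTLC game described in the context, for any $k\in[1,T-1]$, the unique subgame perfect equilibrium in $G^{H}(k,\mathrm{red})$ is that every miner includes an unrelated transaction, and the utility of miner $i$ when doing so is $\lambda_i\big((T-k)f+f^{h}_{\mathcal{B}}\big)$.
   Context: Blockchain model: $n$ miners; miner $i$ has mining power $\lambda_i>0$, $\sum_i\lambda_i=1$, $\lambda_{\min}=\min_i\lambda_i$. Each round exactly one miner is chosen, miner $i$ with probability $\lambda_i$, and creates a block containing one transaction of her choice, receiving its fee. An unrelated transaction offering base fee $f$ is always available. A contract can be redeemed at most once. Miners are rational, non-myopic, with perfect information, maximizing expected tokens. HTLC: a contract holding $v^{\mathrm{dep}}$ tokens initiated in block $b_j$, with digest $dig_a=H(pre_a)$ and timeout $T$, redeemable via htlc-A (signature of $\mathcal{A}$ and $pre_a$; any block) or htlc-B (signature of $\mathcal{B}$; only at least $T$ blocks after initiation). The HTLC game has $T$ rounds creating $b_{j+1},\dots,b_{j+T}$. $\mathcal{A}$ publishes $tx^{h}_{\mathcal{A}}$ (redeems via htlc-A, fee $f^{h}_{\mathcal{A}}$, $f<f^{h}_{\mathcal{A}}<v^{\mathrm{dep}}$) in the first round, and $\mathcal{B}$ publishes $tx^{h}_{\mathcal{B}}$ (redeems via htlc-B, fee $f^{h}_{\mathcal{B}}<v^{\mathrm{dep}}$) with $f^{h}_{\mathcal{B}}>\frac{f^{h}_{\mathcal{A}}-f}{\lambda_{\min}}+f$. A miner can include an unrelated transaction (reward $f$) in any round; $tx^{h}_{\mathcal{A}}$ (reward $f^{h}_{\mathcal{A}}$)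 in any round while the HTLC is unredeemed; $tx^{h}_{\mathcal{B}}$ (reward $f^{h}_{\mathcal{B}}$) only in round $T$ while the HTLC is unredeemed. $G^{H}(k,s)$ denotes the subgame just before round $k\in[1,T]$ (with $T-k+1$ blocks remaining) with the HTLC redeemable ($\mathrm{red}$) or already redeemed ($\mathrm{irred}$). A miner's utility in a subgame is the expected tokens she accumulates within it. *)

(* Defs.v *)
From mathcomp Require Import all_boot all_order all_algebra.
Set Implicit Arguments. Unset Strict Implicit. Unset Printing Implicit Defensive.
Import Order.TTheory GRing.Theory Num.Theory.
Local Open Scope ring_scope.

(* Rounds are numbered k, k+1, ..., T (absolute round
   numbers; round T is the last one, creating block b_{j+T}).
   The state is a boolean: true = red (HTLC redeemable), false = irred. *)

Inductive action := Unrel | TxA | TxB.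

Definition is_unrel (a : action) : bool := if a is Unrel then true else false.

Definition next_state (s : bool) (a : action) : bool := s && is_unrel a.

Definition feasible (T r : nat) (s : bool) (a : action) : bool :=
  match a with
  | Unrel => true
  | TxA => s
  | TxB => s && (r == T)
  end.

Definition fee (R : numDomainType) (f fA fB : R) (a : action) : R :=
  match a with Unrel => f | TxA => fA | TxB => fB end.

(* A history inside the subgame: the sequence of (chosen miner, action) of the
   rounds already played in the subgame (perfect information). *)
Definition hist (n : nat) := seq ('I_n * action).

Definition profile (n : nat) := 'I_n -> hist n -> action.

Fixpoint valid_from (n : nat) (T r : nat) (s : bool) (h : hist n) : bool :=
  match h with
  | [::] => true
  | (j, a) :: h' => feasible T r s a && valid_from T r.+1 (next_state s a) h'
  end.

Definition state_after (n : nat) (s : bool) (h : hist n) : bool :=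
  foldl (fun st p => next_state st p.2) s h.

Definition node (n : nat) (T k : nat) (s : bool) (h : hist n) : bool :=
  valid_from T k s h && (k + size h <= T)%N.

(* expected tokens accumulated by miner i in the m remaining rounds, starting
   in round r with state s after history h, under profile sigma *)
Fixpoint value (R : numDomainType) (n : nat) (lam : 'I_n -> R) (f fA fB : R)
  (sigma : profile n) (i : 'I_n) (m r : nat) (s : bool) (h : hist n) : R :=
  match m with
  | 0 => 0
  | m'.+1 => \sum_(j < n) lam j *
      ((if j == i then fee f fA fB (sigma j h) else 0) +
       value lam f fA fB sigma i m' r.+1 (next_state s (sigma j h))
             (rcons h (j, sigma j h)))
  end.

Definition util (R : numDomainType) (n : nat) (lam : 'I_n -> R) (f fA fB : R)
  (T k : nat) (s : bool) (sigma : profile n) (i : 'I_n) (h : hist n) : R :=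
  value lam f fA fB sigma i (T.+1 - (k + size h)) (k + size h)
        (state_after s h) h.

Definition feasible_strategy (n : nat) (T k : nat) (s : bool)
  (tau : hist n -> action) : Prop :=
  forall h : hist n, node T k s h ->
    feasible T (k + size h) (state_after s h) (tau h).

Definition upd (n : nat) (sigma : profile n) (i : 'I_n) (tau : hist n -> action)
  : profile n := fun j => if j == i then tau else sigma j.

Definition SPE (R : numDomainType) (n : nat) (lam : 'I_n -> R) (f fA fB : R)
  (T k : nat) (s : bool) (sigma : profile n) : Prop :=
  (forall j, feasible_strategy T k s (sigma j)) /\
  forall h : hist n, node T k s h ->
  forall (i : 'I_n) (tau : hist n -> action), feasible_strategy T k s tau ->
    util lam f fA fB T k s (upd sigma i tau) i h
      <= util lam f fA fB T k s sigma i h.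

(* Main.v *)
Require Import Defs.
From mathcomp Require Import all_boot all_order all_algebra.
From mathcomp Require Import lra zify.
Import Order.TTheory GRing.Theory Num.Theory.
Local Open Scope ring_scope.

Definition presc (T : nat) (s : bool) (r : nat) : action :=
  if s && (r == T) then TxB else Unrel.

Definition Wn (R : numDomainType) (li f fB : R) (m : nat) (s : bool) : R :=
  if s then (if m is m'.+1 then li * (m'%:R * f + fB) else 0)
  else li * (m%:R * f).

Arguments Wn {R}.

Lemma presc_feas T s r : feasible T r s (presc T s r).
Proof. by rewrite /presc; case: s => //=; case: (boolP (r == T)) => // ->. Qed.

Lemma valid_rcons n T r s (h : hist n) p :
  valid_from T r s (rcons h p) =
  valid_from T r s h && feasible T (r + size h) (state_after s h) p.2.
Proof.
elim: h r s => [|[j a] h IH] r s /=; first by rewrite addn0; case: p => ? ? /=; rewrite andbT.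
by rewrite IH addSnnS andbA.
Qed.

Lemma state_rcons n s (h : hist n) p :
  state_after s (rcons h p) = next_state (state_after s h) p.2.
Proof. by rewrite /state_after foldl_rcons. Qed.

Lemma value_ext (R : numDomainType) n (lam : 'I_n -> R) f fA fB
  (rho rho' : profile n) i m r s (h : hist n) :
  (forall j (h' : hist n), (size h <= size h')%N -> rho j h' = rho' j h') ->
  value lam f fA fB rho i m r s h = value lam f fA fB rho' i m r s h.
Proof.
elim: m r s h => [//|m IH] r s h H /=.
apply: eq_bigr => j _; rewrite H //; congr (_ * (_ + _)).
apply: IH => j' h' Hs; apply: H; rewrite size_rcons in Hs; lia.
Qed.

Lemma gap (R : realFieldType) (li f fA fB : R) T s r m b :
  f < fA -> fA < fB -> fA - f < li * (fB - f) ->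
  (r + m = T)%N -> feasible T r s b ->
  let g b := fee f fA fB b + Wn li f fB m (next_state s b) in
  g b <= g (presc T s r) /\ (g b = g (presc T s r) -> b = presc T s r).
Proof.
move=> h1 h2 h3 Hr Hb; cbv zeta; rewrite /presc /Wn.
case: s Hb => /=; last by case: b => //= _; split.
case: m Hr => [|m] Hr.
  have -> : (r == T) = true by apply/eqP; lia.
  case: b => //= _; rewrite ?mul0r ?mulr0 ?addr0; (split; [lra | move=> H //; exfalso; lra]).
have Hrt : (r == T) = false by apply/eqP; lia.
rewrite Hrt; case: b => //=; rewrite ?Hrt // => _.
rewrite -addn1 natrD.
split; [lra | move=> H; exfalso; lra].
Qed.

Lemma Wn_presc (R : numDomainType) (li f fB : R) T s r m :
  (r + m = T)%N -> Wn li f fB m (next_state s (presc T s r)) = Wn li f fB m s.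
Proof.
move=> Hr; rewrite /presc /Wn; case: s => //=.
case: m Hr => [|m] Hr.
  by case: (r == T) => //=; rewrite mul0r mulr0.
by have -> : (r == T) = false by apply/eqP; lia.
Qed.

Lemma assemble (R : realFieldType) (li f fA fB : R) T s r m :
  (r + m = T)%N ->
  Wn li f fB m.+1 s =
  li * (fee f fA fB (presc T s r) + Wn li f fB m (next_state s (presc T s r)))
  + (1 - li) * Wn li f fB m s.
Proof.
move=> Hr; rewrite /presc /Wn; case: s => /=.
  case: m Hr => [|m] Hr.
    have -> : (r == T) = true by apply/eqP; lia.
    rewrite /= mul0r add0r !mulr0 !addr0; done.
  have -> : (r == T) = false by apply/eqP; lia.
  rewrite /= -addn1 natrD; lra.
rewrite -addn1 natrD; lra.
Qed.

Lemma sum_but (R : realFieldType) n (lam : 'I_n -> R) i :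
  \sum_(j < n) lam j = 1 -> \sum_(j < n | j != i) lam j = 1 - lam i.
Proof. move=> H; rewrite -H [in RHS](bigD1 i) //=; lra. Qed.

Lemma value_S (R : numDomainType) n (lam : 'I_n -> R) f fA fB
  (sigma : profile n) i m r s (h : hist n) :
  value lam f fA fB sigma i m.+1 r s h = \sum_(j < n) lam j *
      ((if j == i then fee f fA fB (sigma j h) else 0) +
       value lam f fA fB sigma i m r.+1 (next_state s (sigma j h))
             (rcons h (j, sigma j h))).
Proof. by []. Qed.

Lemma node_child n T k (h : hist n) j a m :
  valid_from T k true h -> (k + size h + m.+1 = T.+1)%N ->
  feasible T (k + size h) (state_after true h) a ->
  valid_from T k true (rcons h (j, a)) /\ (k + size (rcons h (j, a)) + m = T.+1)%N.
Proof.
move=> Hv Hs Ha; rewrite valid_rcons Hv Ha size_rcons; split => //; lia.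
Qed.

Lemma spe_det (R : realFieldType) n (lam : 'I_n -> R) f fA fB T k
  (sigma : profile n) :
  (forall i, 0 < lam i) -> \sum_(i < n) lam i = 1 -> f < fA -> fA < fB ->
  (forall i, fA - f < lam i * (fB - f)) ->
  SPE lam f fA fB T k true sigma ->
  forall m (h : hist n), valid_from T k true h -> (k + size h + m = T.+1)%N ->
  (forall i, value lam f fA fB sigma i m (k + size h) (state_after true h) h
             = Wn (lam i) f fB m (state_after true h)) /\
  ((0 < m)%N -> forall j, sigma j h = presc T (state_after true h) (k + size h)).
Proof.
move=> Hpos Hsum HfA HfB Hkey [Hfeas HS].
elim=> [|m IH] h Hv Hs.
  split=> // i /=; rewrite /Wn; case: state_after => //; by rewrite mul0r mulr0.
have Hnode : node T k true h by rewrite /node Hv /=; lia.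
have Hr : (k + size h + m = T)%N by lia.
have Hchild : forall j a, feasible T (k + size h) (state_after true h) a ->
    forall i, value lam f fA fB sigma i m (k + size h).+1
       (next_state (state_after true h) a) (rcons h (j, a))
     = Wn (lam i) f fB m (next_state (state_after true h) a).
  move=> j a Ha i; have [Hv' Hs'] := @node_child _ _ _ _ j _ _ Hv Hs Ha.
  have := (IH _ Hv' Hs').1 i.
  by rewrite state_rcons size_rcons addnS.
have Hact : forall j, sigma j h = presc T (state_after true h) (k + size h).
  move=> j.
  have Hfa := Hfeas j h Hnode.
  have key : forall b, feasible T (k + size h) (state_after true h) b ->
      fee f fA fB b + Wn (lam j) f fB m (next_state (state_after true h) b)
      <= fee f fA fB (sigma j h) +
         Wn (lam j) f fB m (next_state (state_after true h) (sigma j h)).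
    move=> b Hb.
    pose tau := fun h' : hist n =>
      if (size h' == size h) && feasible T (k + size h') (state_after true h') b
      then b else sigma j h'.
    have Htau : feasible_strategy T k true tau.
      move=> h' Hh'; rewrite /tau; case: ifP => [/andP[_ ->] // | _].
      exact: Hfeas.
    have := HS h Hnode j tau Htau.
    rewrite /util.
    have -> : (T.+1 - (k + size h))%N = m.+1 by lia.
    rewrite !value_S (bigD1 j) // [in X in _ <= X](bigD1 j) //= eqxx.
    have -> : upd sigma j tau j h = b by rewrite /upd eqxx /tau eqxx Hb.
    have Hagree : forall a j0, value lam f fA fB (upd sigma j tau) j m (k + size h).+1
          (next_state (state_after true h) a) (rcons h (j0, a)) =
        value lam f fA fB sigma j m (k + size h).+1
          (next_state (state_after true h) a) (rcons h (j0, a)).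
      move=> a j0; apply: value_ext => j1 h1; rewrite size_rcons => Hs1.
      rewrite /upd; case: eqP => [-> | _] //; rewrite /tau.
      by have -> : (size h1 == size h) = false by apply/eqP; lia.
    rewrite Hagree (Hchild _ _ Hb) (Hchild _ _ Hfa).
    under eq_bigr => i Hi do rewrite Hagree /upd (negbTE Hi).
    under [in X in _ <= X]eq_bigr => i Hi do rewrite (negbTE Hi).
    rewrite lerD2r => H.
    by rewrite -(ler_pM2l (Hpos j)).
  have Hp := presc_feas T (state_after true h) (k + size h).
  have [_ Hu] := @gap _ (lam j) f fA fB T _ (k + size h) m _ HfA HfB (Hkey j) Hr Hfa.
  have [H1 _] := @gap _ (lam j) f fA fB T _ (k + size h) m _ HfA HfB (Hkey j) Hr Hp.
  have [H2 _] := @gap _ (lam j) f fA fB T _ (k + size h) m _ HfA HfB (Hkey j) Hr Hfa.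
  apply: Hu; apply/eqP; rewrite eq_le H2 /=; exact: key.
split=> // i.
rewrite value_S (bigD1 i) // eqxx Hact (Hchild _ _ (presc_feas _ _ _)).
rewrite (eq_bigr (fun j0 => lam j0 * Wn (lam i) f fB m (state_after true h))).
  by rewrite -big_distrl /= (@sum_but _ _ _ i Hsum) -(@assemble _ _ _ fA _ _ _ _ _ Hr).
move=> j0 Hj0; rewrite (negbTE Hj0) add0r Hact (Hchild _ _ (presc_feas _ _ _)).
by rewrite (@Wn_presc _ _ _ _ _ _ _ _ Hr).
Qed.

Definition sig0 (n T k : nat) : profile n :=
  fun _ h => presc T (state_after true h) (k + size h).

Lemma dev_le (R : realFieldType) n (lam : 'I_n -> R) f fA fB T k
  (rho : profile n) (i : 'I_n) :
  (forall i, 0 < lam i) -> \sum_(i < n) lam i = 1 -> f < fA -> fA < fB ->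
  (forall i, fA - f < lam i * (fB - f)) ->
  (forall j, j != i -> rho j = sig0 n T k j) ->
  feasible_strategy T k true (rho i) ->
  forall m (h : hist n), valid_from T k true h -> (k + size h + m = T.+1)%N ->
  value lam f fA fB rho i m (k + size h) (state_after true h) h
    <= Wn (lam i) f fB m (state_after true h).
Proof.
move=> Hpos Hsum HfA HfB Hkey Hrho Hfi.
elim=> [|m IH] h Hv Hs.
  by rewrite /= /Wn; case: state_after => //; rewrite mul0r mulr0.
have Hnode : node T k true h by rewrite /node Hv /=; lia.
have Hr : (k + size h + m = T)%N by lia.
have Hch : forall j a, feasible T (k + size h) (state_after true h) a ->
    value lam f fA fB rho i m (k + size h).+1
       (next_state (state_after true h) a) (rcons h (j, a))
     <= Wn (lam i) f fB m (next_state (state_after true h) a).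
  move=> j a Ha; have [Hv' Hs'] := @node_child _ _ _ _ j _ _ Hv Hs Ha.
  have := IH _ Hv' Hs'.
  by rewrite state_rcons size_rcons addnS.
rewrite value_S (bigD1 i) // eqxx.
apply: (le_trans (y := lam i * (fee f fA fB (rho i h) +
     Wn (lam i) f fB m (next_state (state_after true h) (rho i h)))
   + \sum_(j < n | j != i) lam j * Wn (lam i) f fB m (state_after true h))).
  apply: lerD.
    by rewrite ler_pM2l // lerD2l; apply: Hch; apply: Hfi.
  apply: ler_sum => j Hj; rewrite (negbTE Hj) add0r ler_pM2l // Hrho //.
  rewrite /sig0 -(@Wn_presc _ (lam i) f fB T (state_after true h) (k + size h) m Hr).
  exact: Hch (presc_feas _ _ _).
rewrite -big_distrl /= (@sum_but _ _ _ i Hsum) (@assemble _ _ _ fA _ _ _ _ _ Hr).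
rewrite lerD2r ler_pM2l //.
have [H _] := @gap _ (lam i) f fA fB T _ (k + size h) m _ HfA HfB (Hkey i) Hr (Hfi h Hnode).
exact: H.
Qed.

Lemma sig0_val (R : realFieldType) n (lam : 'I_n -> R) f fA fB T k (i : 'I_n) :
  \sum_(i < n) lam i = 1 ->
  forall m (h : hist n), valid_from T k true h -> (k + size h + m = T.+1)%N ->
  value lam f fA fB (sig0 n T k) i m (k + size h) (state_after true h) h
    = Wn (lam i) f fB m (state_after true h).
Proof.
move=> Hsum.
elim=> [|m IH] h Hv Hs.
  by rewrite /= /Wn; case: state_after => //; rewrite mul0r mulr0.
have Hr : (k + size h + m = T)%N by lia.
have Hch : forall j a, feasible T (k + size h) (state_after true h) a ->
    value lam f fA fB (sig0 n T k) i m (k + size h).+1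
       (next_state (state_after true h) a) (rcons h (j, a))
     = Wn (lam i) f fB m (next_state (state_after true h) a).
  move=> j a Ha; have [Hv' Hs'] := @node_child _ _ _ _ j _ _ Hv Hs Ha.
  have := IH _ Hv' Hs'.
  by rewrite state_rcons size_rcons addnS.
have Hch' : forall j, value lam f fA fB (sig0 n T k) i m (k + size h).+1
       (next_state (state_after true h) (sig0 n T k j h)) (rcons h (j, sig0 n T k j h))
     = Wn (lam i) f fB m (state_after true h).
  move=> j; rewrite Hch; last exact: presc_feas.
  exact: Wn_presc.
rewrite value_S (bigD1 i) // eqxx.
under eq_bigr => j Hj do rewrite (negbTE Hj) add0r Hch'.
rewrite -big_distrl /= (@sum_but _ _ _ i Hsum) (@assemble _ _ _ fA _ _ _ _ _ Hr).
by rewrite /sig0 Hch ?presc_feas.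
Qed.

Lemma sig0_SPE (R : realFieldType) n (lam : 'I_n -> R) f fA fB T k :
  (forall i, 0 < lam i) -> \sum_(i < n) lam i = 1 -> f < fA -> fA < fB ->
  (forall i, fA - f < lam i * (fB - f)) ->
  SPE lam f fA fB T k true (sig0 n T k).
Proof.
move=> Hpos Hsum HfA HfB Hkey; split.
  by move=> j h _; rewrite /sig0; apply: presc_feas.
move=> h /andP[Hv Hle] i tau Htau; rewrite /util.
have Hs : (k + size h + (T.+1 - (k + size h)) = T.+1)%N by lia.
rewrite (@sig0_val _ _ lam f fA fB T k i Hsum _ h Hv Hs).
apply: (@dev_le _ _ _ _ _ _ _ _ _ _ Hpos Hsum HfA HfB Hkey) => //.
  by move=> j Hj; rewrite /upd (negbTE Hj).
by rewrite /upd eqxx.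
exact: Hv.
exact: Hs.
Qed.

Theorem lemma9 (R : realFieldType) (n : nat) (lam : 'I_n -> R)
  (lam_min f fA fB vdep : R) (T k : nat) :
  (forall i, 0 < lam i) -> \sum_(i < n) lam i = 1 ->
  (exists i, lam i = lam_min) -> (forall i, lam_min <= lam i) ->
  f < fA -> fA < vdep -> fB < vdep -> (fA - f) / lam_min + f < fB ->
  (1 <= k)%N -> (k <= T - 1)%N ->
  (exists sigma : profile n, SPE lam f fA fB T k true sigma) /\
  (forall sigma1 sigma2 : profile n,
      SPE lam f fA fB T k true sigma1 -> SPE lam f fA fB T k true sigma2 ->
      forall h : hist n, node T k true h -> forall i, sigma1 i h = sigma2 i h) /\
  (forall sigma : profile n, SPE lam f fA fB T k true sigma ->
      (forall i, sigma i [::] = Unrel) /\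
      (forall i, util lam f fA fB T k true sigma i [::]
                 = lam i * ((T - k)%:R * f + fB))).
Proof.
move=> Hpos Hsum [i0 Hi0] Hmin HfA _ _ HfB Hk1 HkT.
have Hlm : 0 < lam_min by rewrite -Hi0.
have Hle1 : lam_min <= 1.
  rewrite -Hi0 -Hsum (bigD1 i0) //= lerDl.
  by apply: sumr_ge0 => j _; apply: ltW.
have H1 : fA - f < lam_min * (fB - f).
  have : (fA - f) / lam_min < fB - f by lra.
  by rewrite ltr_pdivrMr // mulrC.
have Hpf : 0 < fB - f.
  have : 0 < (fA - f) / lam_min by apply: divr_gt0 => //; lra.
  lra.
have Hkey : forall i, fA - f < lam i * (fB - f).
  move=> i; apply: (lt_le_trans H1); rewrite ler_pM2r //.
have HAB : fA < fB.
  have : lam_min * (fB - f) <= 1 * (fB - f) by rewrite ler_pM2r.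
  lra.
have Hdet := fun sigma HS => @spe_det R n lam f fA fB T k sigma Hpos Hsum HfA HAB Hkey HS.
split; first by exists (sig0 n T k); apply: sig0_SPE.
split.
  move=> s1 s2 H1s H2s h /andP[Hv Hle] i.
  have Hs : (k + size h + (T.+1 - (k + size h)) = T.+1)%N by lia.
  have Hm : (0 < T.+1 - (k + size h))%N by lia.
  by rewrite ((Hdet _ H1s _ _ Hv Hs).2 Hm) ((Hdet _ H2s _ _ Hv Hs).2 Hm).
move=> sigma HS.
have Hs : (k + size ([::] : hist n) + (T.+1 - k) = T.+1)%N by rewrite /=; lia.
have Hm : (0 < T.+1 - k)%N by lia.
have [Hval Hact] := Hdet _ HS _ ([::] : hist n) (erefl true : is_true (valid_from T k true ([::] : hist n))) Hs.
split.
  move=> i; rewrite (Hact Hm i) /presc /=.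
  by have -> : (k + 0 == T)%N = false by apply/eqP; lia.
move=> i; rewrite /util /= addn0 -[X in value _ _ _ _ _ _ _ X](addn0 k) Hval /Wn /=.
by have -> : (T.+1 - k = (T - k).+1)%N by lia.
Qed.
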